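(* Let $M\in\mathrm{Mat}(2,\mathbb{Z})$ with $D=\det(M)$, and let $n=p_1^{r_1}p_2^{r_2}\cdots p_s^{r_s}$ be the prime decomposition of $n$. If $n$ is not divisible by $4$, then $M$ is reversible mod $n$ if and only if, for each $1\le i\le s$, $D\equiv1$ or $M^2\equiv\mathbb{1}\pmod{p_i^{r_i}}$. If $n=2^{r_1}p_2^{r_2}\cdots p_s^{r_s}$ with $r_1\ge2$ (and $p_2,\dots,p_s$ odd), then $M$ is reversible mod $n$ if and only if $M$ is reversible mod $2^{r_1}$ and, for all $i>1$, $D\equiv1$ or $M^2\equiv\mathbb{1}\pmod{p_i^{r_i}}$.
   Context: $M$ is reversible mod $k$ if $\det M$ is a unit mod $k$ and there exists $R\in\mathrm{GL}(2,\mathbb{Z}/k\mathbb{Z})$ with $RMR^{-1}\equiv M^{-1}\pmod k$. *)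

(* Defs.v *)
From mathcomp Require Import all_boot all_order all_algebra.
Set Implicit Arguments. Unset Strict Implicit. Unset Printing Implicit Defensive.
Import GRing.Theory Num.Theory.
Local Open Scope ring_scope.

(* Integer matrices are used as lifts of matrices over Z/kZ.
   Two integer matrices are congruent mod k iff all entries are. *)
Definition mx_eqmod (k : nat) (m n : nat) (A B : 'M[int]_(m, n)) : Prop :=
  forall i j, (A i j = B i j %[mod k%:Z])%Z.

Definition unit_mod (k : nat) (a : int) : Prop :=
  exists u : int, (a * u = 1 %[mod k%:Z])%Z.

Definition inv_mod (k : nat) (A Ainv : 'M[int]_2) : Prop :=
  mx_eqmod k (A *m Ainv) 1%:M /\ mx_eqmod k (Ainv *m A) 1%:M.

Definition reversible_mod (k : nat) (M : 'M[int]_2) : Prop :=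
  unit_mod k (\det M) /\
  exists R Rinv Minv : 'M[int]_2,
    inv_mod k R Rinv /\ inv_mod k M Minv /\
    mx_eqmod k (R *m M *m Rinv) Minv.

(* Main.v *)
Require Import Defs.
From mathcomp Require Import all_boot all_order all_algebra.
From mathcomp Require Import ring lra zify.
Import GRing.Theory Num.Theory.
Local Open Scope ring_scope.


Section Two.
Variable R : comPzRingType.
Implicit Types A B : 'M[R]_2.

Lemma ord2P (i : 'I_2) : i = 0 \/ i = 1.
Proof. by case: i => [[|[|//]] Hi]; [left|right]; apply/val_inj. Qed.

Lemma mx2P A B : A 0 0 = B 0 0 -> A 0 1 = B 0 1 -> A 1 0 = B 1 0 ->
  A 1 1 = B 1 1 -> A = B.
Proof.
move=> h1 h2 h3 h4; apply/matrixP => i j.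
by case: (ord2P i) => ->; case: (ord2P j) => ->.
Qed.

Lemma cof2 A i j : cofactor A i j =
  (-1) ^+ (i + j) * A (lift i 0) (lift j 0).
Proof. by rewrite /cofactor det_mx11 !mxE. Qed.

Lemma lift01 (j : 'I_1) : lift (0 : 'I_2) j = 1. Proof. by rewrite (ord1 j); apply/val_inj. Qed.
Lemma lift10 (j : 'I_1) : lift (1 : 'I_2) j = 0. Proof. by rewrite (ord1 j); apply/val_inj. Qed.

Lemma det2 A : \det A = A 0 0 * A 1 1 - A 0 1 * A 1 0.
Proof.
rewrite (expand_det_row _ 0) big_ord_recl big_ord1 !cof2 /=.
rewrite lift01 lift10 /= expr0 expr1 mul1r; ring.
Qed.

Lemma ord0E : ord0 = 0 :> 'I_2. Proof. exact/val_inj. Qed.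
Lemma lift00 : lift ord0 ord0 = 1 :> 'I_2. Proof. exact/val_inj. Qed.

Lemma mul2E A B i j : (A *m B) i j = A i 0 * B 0 j + A i 1 * B 1 j.
Proof.
rewrite mxE big_ord_recl big_ord1.
have -> : lift ord0 ord0 = 1 :> 'I_2 by apply/val_inj.
by have -> : ord0 = 0 :> 'I_2 by apply/val_inj.
Qed.

Lemma adj2_00 A : \adj A 0 0 = A 1 1.
Proof. by rewrite mxE cof2 lift01 /= expr0 mul1r. Qed.
Lemma adj2_01 A : \adj A 0 1 = - A 0 1.
Proof. by rewrite mxE cof2 lift01 lift10 /= expr1 mulN1r. Qed.
Lemma adj2_10 A : \adj A 1 0 = - A 1 0.
Proof. by rewrite mxE cof2 lift01 lift10 /= expr1 mulN1r. Qed.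
Lemma adj2_11 A : \adj A 1 1 = A 0 0.
Proof. by rewrite mxE cof2 lift10 /= expr2 mulN1r opprK mul1r. Qed.

Lemma tr2 A : \tr A = A 0 0 + A 1 1.
Proof. by rewrite /mxtrace big_ord_recl big_ord1 lift00 ord0E. Qed.

Lemma id2E (i j : 'I_2) : (1%:M : 'M[R]_2) i j = (i == j)%:R.
Proof. by rewrite mxE. Qed.

Lemma CH2 A : A *m A = (\tr A) *: A - (\det A)%:M.
Proof.
apply: mx2P; rewrite !mul2E !mxE tr2 det2 /=; ring.
Qed.

Lemma tr_adj2 A : \tr (\adj A) = \tr A.
Proof. by rewrite !tr2 adj2_00 adj2_11 addrC. Qed.
End Two.
Lemma dvdz_primeM (p : nat) (x y : int) : prime p ->
  (p%:Z %| x * y)%Z = (p%:Z %| x)%Z || (p%:Z %| y)%Z.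
Proof. by move=> pp; rewrite !dvdzE abszM Euclid_dvdM. Qed.

Lemma coprimez_ndvd (p : nat) (x : int) : prime p ->
  ~~ (p%:Z %| x)%Z -> coprimez x p.
Proof.
move=> pp; rewrite dvdzE coprimezE coprime_sym /= => h.
by rewrite prime_coprime.
Qed.

Lemma dvdz_sq (p : nat) (x : int) : prime p -> (p%:Z %| x * x)%Z = (p%:Z %| x)%Z.
Proof. by move=> pp; rewrite dvdz_primeM // orbb. Qed.


Definition Rm (x y z : int) : 'M[int]_2 :=
  \matrix_(i, j) (if (i : nat) == 0%N then (if (j : nat) == 0%N then y else z)
                  else (if (j : nat) == 0%N then - x else - y)).

Lemma eq_by (u v w : int) : u - v = w -> w = 0 -> u = v.
Proof. by move=> h1 h2; apply/eqP; rewrite -subr_eq0 h1 h2. Qed.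

Lemma conjR (M : 'M[int]_2) (g b c e x y z : int) :
  M 0 1 = g * b -> M 1 0 = g * c -> M 1 1 = M 0 0 + g * e ->
  x * b + y * e - z * c = 0 -> Rm x y z *m M = \adj M *m Rm x y z.
Proof.
move=> hb hc he H.
apply: mx2P; rewrite !mul2E ?adj2_00 ?adj2_01 ?adj2_10 ?adj2_11 !mxE /= ?hb ?hc ?he.
- by apply: (@eq_by _ _ (- g * (x * b + y * e - z * c))); [ring | rewrite H mulr0].
- ring.
- ring.
- by apply: (@eq_by _ _ (- g * (x * b + y * e - z * c))); [ring | rewrite H mulr0].
Qed.

Lemma detRm x y z : \det (Rm x y z) = x * z - y * y.
Proof. rewrite det2 !mxE /=; ring. Qed.
Lemma Zk_nat0 (k n : nat) : (1 < k)%N -> ((n%:R : 'Z_k) == 0) = (k %| n)%N.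
Proof.
move=> k1; apply/eqP/idP => [H0|Hd].
  have := congr1 (@nat_of_ord _) H0; rewrite val_Zp_nat //= => H.
  by apply/eqP.
apply/val_inj => /=; rewrite val_Zp_nat //; exact/eqP.
Qed.

Lemma Zk_int0 (k : nat) (z : int) : (1 < k)%N ->
  ((z%:~R : 'Z_k) == 0) = (k%:Z %| z)%Z.
Proof.
move=> k1; rewrite dvdzE /=.
case: z => n; first by rewrite /= Zk_nat0.
rewrite NegzE rmorphN /= oppr_eq0. exact: Zk_nat0.
Qed.

Lemma Zk_intP (k : nat) (x y : int) : (1 < k)%N ->
  ((x%:~R : 'Z_k) = y%:~R) <-> (x = y %[mod k%:Z])%Z.
Proof.
move=> k1; split.
  by move=> /eqP; rewrite -subr_eq0 -rmorphB /= Zk_int0 // -eqz_mod_dvd => /eqP.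
by move=> /eqP; rewrite eqz_mod_dvd -Zk_int0 // rmorphB subr_eq0 => /eqP.
Qed.

Lemma Zk_surj (k : nat) (a : 'Z_k) : exists x : int, x%:~R = a.
Proof. exists (a : nat)%:Z; rewrite -pmulrn. exact: natr_Zp. Qed.
Local Open Scope ring_scope.

Lemma exR (M : 'M[int]_2) (p : nat) : prime p ->
  exists R : 'M[int]_2, R *m M = \adj M *m R /\ coprimez (\det R) p.
Proof.
move=> pp.
set b := M 0 1; set c := M 1 0; set e := M 1 1 - M 0 0.
set g := gcdz (gcdz b c) e.
have [g0|gn0] := eqVneq g 0.
  move/eqP: g0; rewrite /g gcdz_eq0 gcdz_eq0 => /andP[/andP[/eqP b0 /eqP c0] /eqP e0].
  exists 1%:M; split; last by rewrite det1 coprimezE /= coprime_sym coprimen1.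
  rewrite mul1mx mulmx1; apply: mx2P; rewrite ?adj2_00 ?adj2_01 ?adj2_10 ?adj2_11.
  - by apply/eqP; rewrite eq_sym -subr_eq0 -/e e0.
  - by rewrite -/b b0 oppr0.
  - by rewrite -/c c0 oppr0.
  - by apply/eqP; rewrite -subr_eq0 -/e e0.
have gb : (g %| b)%Z by rewrite /g (dvdz_trans (dvdz_gcdl _ _)) ?dvdz_gcdl.
have gc : (g %| c)%Z by rewrite /g (dvdz_trans (dvdz_gcdl _ _)) ?dvdz_gcdr.
have ge : (g %| e)%Z by rewrite /g dvdz_gcdr.
set b' := (b %/ g)%Z; set c' := (c %/ g)%Z; set e' := (e %/ g)%Z.
have hb : M 0 1 = g * b' by rewrite mulrC divzK.
have hc : M 1 0 = g * c' by rewrite mulrC divzK.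
have he : M 1 1 = M 0 0 + g * e' by rewrite mulrC divzK // /e addrC subrK.
have nall : ~~ [&& (p%:Z %| b')%Z, (p%:Z %| c')%Z & (p%:Z %| e')%Z].
  apply/negP => /and3P[pb pc pe].
  have : (p%:Z * g %| 1 * g)%Z.
    rewrite mul1r /g dvdz_gcd; apply/andP; split; last first.
      by rewrite -/e -/g -(divzK ge) dvdz_mul2r.
    rewrite dvdz_gcd; apply/andP; split.
      by rewrite -/b -/g -(divzK gb) dvdz_mul2r.
    by rewrite -/c -/g -(divzK gc) dvdz_mul2r.
  rewrite dvdz_mul2r // dvdz1 /= => /eqP p1.
  by move: (prime_gt1 pp); rewrite p1.
have [pb|pb] := boolP (p%:Z %| b')%Z; last first.
  exists (Rm e' (- b') 0); split.
    by apply: (@conjR _ _ _ _ _ _ _ _ hb hc he); ring.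
  rewrite detRm; apply: coprimez_ndvd => //.
  by rewrite mulr0 sub0r rpredN mulrNN dvdz_sq.
have [pc|pc] := boolP (p%:Z %| c')%Z; last first.
  exists (Rm 0 c' e'); split.
    by apply: (@conjR _ _ _ _ _ _ _ _ hb hc he); ring.
  rewrite detRm; apply: coprimez_ndvd => //.
  by rewrite mul0r sub0r rpredN dvdz_sq.
have pe : ~~ (p%:Z %| e')%Z by move: nall; rewrite pb pc.
exists (Rm e' (c' - b') e'); split.
  by apply: (@conjR _ _ _ _ _ _ _ _ hb hc he); ring.
rewrite detRm; apply: coprimez_ndvd => //; apply: contra pe => h.
rewrite -dvdz_sq //.
have -> : e' * e' = (e' * e' - (c' - b') * (c' - b')) + (c' - b') * (c' - b') by ring.
by rewrite rpredD // dvdz_mulr // rpredB.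
Qed.
Local Open Scope ring_scope.

Notation mZ k A := (map_mx (intmul (1 : 'Z_k)) A).

Lemma mx_eqmodP k (A B : 'M[int]_2) : (1 < k)%N ->
  mx_eqmod k A B <-> mZ k A = mZ k B.
Proof.
move=> k1; split => [H|H].
  by apply/matrixP => i j; rewrite !mxE; apply/Zk_intP.
move=> i j; apply/Zk_intP => //.
by have := congr1 (fun X : 'M['Z_k]_2 => X i j) H; rewrite !mxE.
Qed.

Lemma zeq1 (x y : int) : (x = y %[mod 1%N%:Z])%Z.
Proof. by rewrite !modz1. Qed.

Lemma rev1 M : reversible_mod 1 M.
Proof.
split; first by exists 0; apply: zeq1.
by exists 1%:M, 1%:M, 1%:M; split; [|split]; try split; move=> i j; apply: zeq1.
Qed.

Lemma unit_modP k (a : int) : (1 < k)%N ->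
  unit_mod k a <-> (a%:~R : 'Z_k) \is a GRing.unit.
Proof.
move=> k1; split.
  by case=> u /(Zk_intP _ _ _ k1); rewrite rmorphM rmorph1 /= => h; apply/unitrPr; exists u%:~R.
move=> /unitrPr [y hy]; have [u hu] := Zk_surj k y.
exists u; apply: (iffLR (Zk_intP k (a * u) 1 k1)); by rewrite rmorphM rmorph1 /= hu.
Qed.

Lemma rev_nec k M : (1 < k)%N -> reversible_mod k M ->
  (k%:Z %| \det M * \det M - 1)%Z /\ (k%:Z %| \det M * \tr M - \tr M)%Z.
Proof.
move=> k1 [_ [R [Ri [Mi [[h1 h2] [[h3 h4] h5]]]]]].
move: h1 h2 h3 h4 h5; rewrite !mx_eqmodP // !map_mxM !map_mx1.
set R' := mZ k R; set Ri' := mZ k Ri; set M' := mZ k M; set Mi' := mZ k Mi.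
move=> h1 h2 h3 h4 h5.
have dR : \det R' * \det Ri' = 1 by rewrite -det_mulmx h1 det1.
have dM : \det M' * \det Mi' = 1 by rewrite -det_mulmx h3 det1.
have dMi : \det Mi' = \det M'.
  rewrite -h5 !det_mulmx mulrAC -det_mulmx h1 det1 mul1r //.
have tMi : \tr Mi' = \tr M'.
  by rewrite -h5 -mulmxA mxtrace_mulC -mulmxA h2 mulmx1.
have adjM : \adj M' = \det M' *: Mi'.
  by rewrite -[\adj M']mulmx1 -h3 mulmxA mul_adj_mx mul_scalar_mx.
have tM : \tr M' = (\tr M)%:~R by rewrite !tr2 !mxE rmorphD.
split; rewrite -Zk_int0 // ?rmorphB ?rmorphM /= ?rmorph1 -?det_map_mx -/M' subr_eq0.
  by apply/eqP; rewrite -dM dMi.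
by apply/eqP; rewrite -tM -{2}tr_adj2 adjM mxtraceZ tMi.
Qed.
Local Open Scope ring_scope.

Lemma nt (p r : nat) (D t : int) : prime p -> (odd p || (r <= 1)%N) ->
  ((p ^ r)%N%:Z %| D * D - 1)%Z -> ((p ^ r)%N%:Z %| D * t - t)%Z ->
  ((p ^ r)%N%:Z %| D - 1)%Z \/ (((p ^ r)%N%:Z %| D + 1)%Z /\ ((p ^ r)%N%:Z %| t)%Z).
Proof.
move=> pp hpr h1 h2.
case: r hpr h1 h2 => [|r] hpr h1 h2; first by left; rewrite expn0 dvd1z.
have qE : (p ^ r.+1)%N%:Z = p%:Z ^+ r.+1 by rewrite -natz natrX natz.
rewrite qE in h1 h2 *.
have e1 : D * D - 1 = (D - 1) * (D + 1) by ring.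
have e2 : D * t - t = (D - 1) * t by ring.
rewrite e1 in h1; rewrite e2 in h2.
have [pD1|pD1] := boolP (p%:Z %| D + 1)%Z; last first.
  left; move: h1; rewrite Gauss_dvdzl //.
  by apply: coprimezXl; rewrite coprimez_sym; apply: coprimez_ndvd.
have [pDm|pDm] := boolP (p%:Z %| D - 1)%Z.
  have p2 : (p%:Z %| 2)%Z.
    have -> : 2 = (D + 1) - (D - 1) :> int by ring.
    by rewrite rpredB.
  have p2' : p = 2%N.
    move: p2; rewrite dvdzE /= => h; have ple : (p <= 2)%N by apply: dvdn_leq.
    by have := prime_gt1 pp; lia.
  move: hpr; rewrite p2' /= ltnS leqn0 => /eqP r0.
  by left; rewrite r0 expr1 -p2'.
have cop : coprimez (p%:Z ^+ r.+1) (D - 1).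
  by apply: coprimezXl; rewrite coprimez_sym; apply: coprimez_ndvd.
right; split.
  by move: h1; rewrite Gauss_dvdzr.
by move: h2; rewrite Gauss_dvdzr.
Qed.
Local Open Scope ring_scope.

Lemma rev_sq k M : (0 < k)%N -> mx_eqmod k (M *m M) 1%:M -> reversible_mod k M.
Proof.
case: k => // -[_ _|k _]; first exact: rev1.
move=> /mx_eqmodP h; have {h} h := h isT.
rewrite map_mxM map_mx1 in h.
split.
  apply/unit_modP => //; apply/unitrPr; exists (\det M)%:~R.
  by rewrite -rmorphM /= -det_mulmx -det_map_mx map_mxM h det1.
exists 1%:M, 1%:M, M; split; [|split]; try split; apply/mx_eqmodP => //;
  by rewrite ?mulmx1 ?map_mxM ?map_mx1 ?mulmx1 ?mul1mx.
Qed.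

Lemma rev_det (p r : nat) M : prime p ->
  (\det M = 1 %[mod (p ^ r)%N%:Z])%Z -> reversible_mod (p ^ r) M.
Proof.
move=> pp hD.
case: r hD => [|r] hD; first by rewrite expn0; exact: rev1.
have q1 : (1 < p ^ r.+1)%N.
  rewrite expnS; apply: (leq_trans (prime_gt1 pp)); apply: leq_pmulr; by rewrite expn_gt0 prime_gt0.
have [R [hR cR]] := exR M p pp.
have cq : coprimez (\det R) (p ^ r.+1)%N.
  rewrite (_ : (p ^ r.+1)%N%:Z = p%:Z ^+ r.+1); last by rewrite -natz natrX natz.
  exact: coprimezXr.
have [[s v] /= hsv] := coprimezP _ _ cq.
have phiD : ((\det M)%:~R : 'Z_(p ^ r.+1)) = 1 by have := iffRL (Zk_intP _ _ _ q1) hD; rewrite rmorph1.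
have phis : (s%:~R : 'Z_(p ^ r.+1)) * (\det R)%:~R = 1.
  have : (((s * \det R + v * (p ^ r.+1)%N%:Z))%:~R : 'Z_(p ^ r.+1)) = 1 by rewrite hsv.
  rewrite rmorphD !rmorphM /=.
  have -> : (((p ^ r.+1)%N%:Z)%:~R : 'Z_(p ^ r.+1)) = 0 by apply/eqP; rewrite Zk_int0.
  by rewrite mulr0 addr0.
split.
  apply/unit_modP => //; rewrite phiD; exact: unitr1.
exists R, (s *: \adj R), (\adj M); split; [|split]; try split; apply/mx_eqmodP => //.
- by rewrite map_mxM map_mxZ map_mx1 -scalemxAr map_mx_adj mul_mx_adj det_map_mx scale_scalar_mx phis.
- by rewrite map_mxM map_mxZ map_mx1 -scalemxAl map_mx_adj mul_adj_mx det_map_mx scale_scalar_mx phis.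
- by rewrite map_mxM map_mx1 map_mx_adj mul_mx_adj det_map_mx /= phiD.
- by rewrite map_mxM map_mx1 map_mx_adj mul_adj_mx det_map_mx /= phiD.
- rewrite hR !map_mxM map_mxZ -scalemxAr -mulmxA !map_mx_adj mul_mx_adj det_map_mx /=.
  by rewrite mul_mx_scalar scalerA phis scale1r.
Qed.
Local Open Scope ring_scope.

Lemma pp_rev (p r : nat) M : prime p -> (odd p || (r <= 1)%N) ->
  reversible_mod (p ^ r) M <->
  ((\det M = 1 %[mod (p ^ r)%N%:Z])%Z \/ mx_eqmod (p ^ r) (M *m M) 1%:M).
Proof.
move=> pp hpr; split; last first.
  case=> h; first exact: rev_det.
  by apply: rev_sq => //; rewrite expn_gt0 prime_gt0.
case: r hpr => [|r] hpr; first by left; rewrite expn0; apply: zeq1.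
have q1 : (1 < p ^ r.+1)%N.
  rewrite expnS; apply: (leq_trans (prime_gt1 pp)); apply: leq_pmulr; by rewrite expn_gt0 prime_gt0.
move=> /(rev_nec _ _ q1) [h1 h2].
case: (nt _ _ _ _ pp hpr h1 h2) => [h|[h3 h4]].
  by left; apply/eqP; rewrite eqz_mod_dvd.
right; apply/mx_eqmodP => //.
rewrite map_mxM CH2 map_mx1.
have -> : \tr (mZ (p ^ r.+1) M) = 0.
  by rewrite tr2 !mxE -rmorphD /= -tr2; apply/eqP; rewrite Zk_int0.
have -> : \det (mZ (p ^ r.+1) M) = -1.
  rewrite det_map_mx /=; apply/eqP; rewrite -subr_eq0 opprK.
  by rewrite -(rmorph1 (intmul (1 : 'Z_(p ^ r.+1)))) -rmorphD /= Zk_int0.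
by rewrite scale0r sub0r raddfN /= opprK.
Qed.
Local Open Scope ring_scope.

Lemma zeq_dvd (d k : nat) (x y : int) : (d %| k)%N ->
  (x = y %[mod k%:Z])%Z -> (x = y %[mod d%:Z])%Z.
Proof.
move=> dk /eqP; rewrite eqz_mod_dvd => h; apply/eqP; rewrite eqz_mod_dvd.
by apply: dvdz_trans h; rewrite dvdzE.
Qed.

Lemma mx_eqmod_dvd (d k : nat) (A B : 'M[int]_2) : (d %| k)%N ->
  mx_eqmod k A B -> mx_eqmod d A B.
Proof. by move=> dk h i j; apply: zeq_dvd (h i j). Qed.

Lemma rev_dvd (d k : nat) M : (d %| k)%N -> reversible_mod k M -> reversible_mod d M.
Proof.
move=> dk [[u hu] [R [Ri [Mi [[h1 h2] [[h3 h4] h5]]]]]].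
split; first by exists u; apply: zeq_dvd hu.
by exists R, Ri, Mi; split; [|split]; try split; apply: mx_eqmod_dvd dk _.
Qed.

Lemma mx_eqmod_trans k (A B C : 'M[int]_2) :
  mx_eqmod k A B -> mx_eqmod k B C -> mx_eqmod k A C.
Proof. by move=> h1 h2 i j; rewrite h1 h2. Qed.

Lemma mx_eqmod_sym k (A B : 'M[int]_2) : mx_eqmod k A B -> mx_eqmod k B A.
Proof. by move=> h i j; rewrite h. Qed.

Lemma mx_eqmod_mul k (A A' B B' : 'M[int]_2) : (0 < k)%N ->
  mx_eqmod k A A' -> mx_eqmod k B B' -> mx_eqmod k (A *m B) (A' *m B').
Proof.
case: k => // -[_ _ _ i j|k _]; first exact: zeq1.
move=> /mx_eqmodP -/(_ isT) h1 /mx_eqmodP -/(_ isT) h2.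
by apply/mx_eqmodP => //; rewrite !map_mxM h1 h2.
Qed.

Lemma zeq_crt (a b : nat) (x y : int) : coprime a b ->
  (x = y %[mod a%:Z])%Z -> (x = y %[mod b%:Z])%Z -> (x = y %[mod (a * b)%N%:Z])%Z.
Proof.
move=> cab h1 h2; apply/eqP; rewrite PoszM zchinese_remainder //.
by rewrite h1 h2 !eqxx.
Qed.

Definition mcrt (a b : nat) (X Y : 'M[int]_2) : 'M[int]_2 :=
  \matrix_(i, j) zchinese a b (X i j) (Y i j).

Lemma mcrtl a b X Y : coprime a b -> mx_eqmod a (mcrt a b X Y) X.
Proof. by move=> cab i j; rewrite mxE zchinese_modl. Qed.
Lemma mcrtr a b X Y : coprime a b -> mx_eqmod b (mcrt a b X Y) Y.
Proof. by move=> cab i j; rewrite mxE zchinese_modr. Qed.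

Lemma rev_crt (a b : nat) M : (0 < a)%N -> (0 < b)%N -> coprime a b ->
  reversible_mod a M -> reversible_mod b M -> reversible_mod (a * b) M.
Proof.
move=> a0 b0 cab [[ua hua] [Ra [Ria [Mia [[a1 a2] [[a3 a4] a5]]]]]]
  [[ub hub] [Rb [Rib [Mib [[b1 b2] [[b3 b4] b5]]]]]].
split.
  exists (zchinese a b ua ub); apply: zeq_crt => //.
    by rewrite -modzMmr zchinese_modl // modzMmr.
  by rewrite -modzMmr zchinese_modr // modzMmr.
set R := mcrt a b Ra Rb; set Ri := mcrt a b Ria Rib; set Mi := mcrt a b Mia Mib.
have Ral := mcrtl _ _ Ra Rb cab; have Rbr := mcrtr _ _ Ra Rb cab.
have Rial := mcrtl _ _ Ria Rib cab; have Ribr := mcrtr _ _ Ria Rib cab.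
have Mial := mcrtl _ _ Mia Mib cab; have Mibr := mcrtr _ _ Mia Mib cab.
have mm := mx_eqmod_mul; have mt := mx_eqmod_trans; have ms := mx_eqmod_sym.
have rM : forall k, mx_eqmod k M M by [].
exists R, Ri, Mi; split; [|split]; try split; move=> i j; apply: zeq_crt => //;
  move: i j.
- exact: mt (mm _ _ _ _ _ a0 Ral Rial) a1.
- exact: mt (mm _ _ _ _ _ b0 Rbr Ribr) b1.
- exact: mt (mm _ _ _ _ _ a0 Rial Ral) a2.
- exact: mt (mm _ _ _ _ _ b0 Ribr Rbr) b2.
- exact: mt (mm _ _ _ _ _ a0 (rM _) Mial) a3.
- exact: mt (mm _ _ _ _ _ b0 (rM _) Mibr) b3.
- exact: mt (mm _ _ _ _ _ a0 Mial (rM _)) a4.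
- exact: mt (mm _ _ _ _ _ b0 Mibr (rM _)) b4.
- exact: mt _ _ _ _ (mt _ _ _ _ (mm _ _ _ _ _ a0 (mm _ _ _ _ _ a0 Ral (rM _)) Rial) a5) (ms _ _ _ Mial).
- exact: mt _ _ _ _ (mt _ _ _ _ (mm _ _ _ _ _ b0 (mm _ _ _ _ _ b0 Rbr (rM _)) Ribr) b5) (ms _ _ _ Mibr).
Qed.
Local Open Scope ring_scope.

Lemma rev_factor M (n : nat) : (0 < n)%N ->
  reversible_mod n M <->
  (forall p, prime p -> (p %| n)%N -> reversible_mod (p ^ logn p n) M).
Proof.
elim/ltn_ind: n => n IH n0.
have [n1|n1] := leqP n 1.
  have -> : n = 1%N by apply/eqP; rewrite eqn_leq n1 n0.
  split => _; first by move=> p pp; rewrite dvdn1 => /eqP p1; move: pp; rewrite p1.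
  exact: rev1.
set p := pdiv n.
have pp : prime p by apply: pdiv_prime.
have [m cpm nE] := pfactor_coprime pp n0.
set r := logn p n in nE.
have m0 : (0 < m)%N by move: n0; rewrite nE muln_gt0 => /andP[].
have pr0 : (0 < p ^ r)%N by rewrite expn_gt0 prime_gt0.
have r0 : (0 < r)%N.
  by rewrite /r -(pfactor_dvdn 1 pp n0) expn1 /p pdiv_dvd.
have mn : (m < n)%N.
  rewrite nE -{1}(muln1 m) ltn_pmul2l //.
  by apply: (leq_trans (prime_gt1 pp)); rewrite -{1}(expn1 p) leq_pexp2l // prime_gt0.
have cmq : coprime m (p ^ r) by rewrite coprime_sym coprimeXl.
have logm : forall q, prime q -> q != p -> logn q n = logn q m.
  move=> q qp qn; rewrite nE lognM // lognX (logn_prime q pp) (negbTE qn) muln0 addn0.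
  by [].
have [IHl IHr] := IH m mn m0.
split.
  move=> h q qp qn.
  have [qe|qne] := eqVneq q p.
    by rewrite qe -/r; apply: rev_dvd h; rewrite nE dvdn_mull.
  have qm : (q %| m)%N.
    move: qn; rewrite nE Euclid_dvdM // Euclid_dvdX // (dvdn_prime2 qp pp) (negbTE qne) /=.
    by rewrite orbF.
  rewrite logm //; apply: IHl qp qm; apply: rev_dvd h; by rewrite nE dvdn_mulr.
move=> h; rewrite nE; apply: rev_crt => //.
  apply: IHr => q qp qm.
  have qne : q != p by apply: contraTneq qm => ->; rewrite -prime_coprime.
  rewrite -logm //; apply: h qp _; by rewrite nE dvdn_mulr.
by apply: h pp _; rewrite pdiv_dvd.
Qed.

Theorem corollary4p16 (M : 'M[int]_2) (n : nat) (n_gt0 : (0 < n)%N) :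
  let D := \det M in
  let cond p := (let q := (p ^ logn p n)%N in
                 (D = 1 %[mod q%:Z])%Z \/ mx_eqmod q (M *m M) 1%:M) in
  (~~ (4 %| n)%N ->
     (reversible_mod n M <->
      forall p : nat, prime p -> (p %| n)%N -> cond p)) /\
  ((4 %| n)%N ->
     (reversible_mod n M <->
      reversible_mod (2 ^ logn 2 n) M /\
      forall p : nat, prime p -> odd p -> (p %| n)%N -> cond p)).
Proof.
move=> D cond.
have key : forall p, prime p -> (odd p || (logn p n <= 1)%N) ->
    reversible_mod (p ^ logn p n) M <-> cond p.
  by move=> p pp h; rewrite /cond /D; apply: pp_rev.
split.
  move=> n4.
  have side : forall p, prime p -> odd p || (logn p n <= 1)%N.
    move=> p pp; have [->|->] := even_prime pp; last by [].
    rewrite orFb leqNgt; apply: contra n4 => l2.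
    by apply: dvdn_trans (_ : (2 ^ 2 %| n)%N) => //; rewrite pfactor_dvdn.
  rewrite rev_factor //; split => h p pp pn.
    by apply/key => //; [exact: side | exact: h].
  by apply/key => //; [exact: side | exact: h].
move=> n4; rewrite rev_factor //; split.
  move=> h; split; first by apply: h => //; apply: dvdn_trans n4.
  by move=> p pp op pn; apply/key; rewrite ?op //; apply: h.
move=> [h2 h] p pp pn.
have [p2|op] := even_prime pp; first by rewrite p2.
by apply/key; rewrite ?op //; apply: h.
Qed.
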